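(* Let $G$ be a graph of order $n$ with fair domination number $\gamma_f(G)$. Then $\mathcal{C}_f(G)\leq n-\gamma_f(G)+2$.
   Context: All graphs are finite and simple; $G=(V,E)$, $N(v)$ is the open neighborhood of $v$. A dominating set is $D\subseteq V$ such that every vertex of $V\setminus D$ has a neighbor in $D$. For an integer $k\geq 1$, a $k$-fair dominating set is a dominating set $D$ such that $|N(v)\cap D|=k$ for every $v\in V\setminus D$. A fair dominating set is a $k$-fair dominating set for some integer $k\geq 1$. The fair domination number $\gamma_f(G)$ is the minimum cardinality of a fair dominating set of $G$ if $G$ has an edge, and $\gamma_f(\overline{K_n})=n$ by convention. A fair coalition consists of two disjoint sets $A_1,A_2\subseteq V$, neither of which is a fair dominating set, such that $A_1\cup A_2$ is a fair dominating set. A fair coalition partition ($fc$-partition) of $G$ is a partition $\Upsilon=\{A_1,\dots,A_k\}$ of $V$ such that every $A_i$ is either a singleton fair dominating set of $G$, or is not a fair dominating set and forms a fair coalition with some other non-fair-dominating set $A_j\in\Upsilon$. The fair coalition number $\mathcal{C}_f(G)$ is the maximum number of parts of an $fc$-partition of $G$. *)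

(* Defs.v *)
(* A finite simple graph is a symmetric irreflexive relation
   e on a finType T (vertex set V = T, order n = #|T|). *)
From mathcomp Require Import all_boot.
Set Implicit Arguments. Unset Strict Implicit. Unset Printing Implicit Defensive.

Section FairCoalition.
Variables (T : finType) (e : rel T).

Definition nbhd (v : T) : {set T} := [set u | e v u].

Definition dominating (D : {set T}) : bool :=
  [forall v, (v \notin D) ==> [exists u in D, e v u]].

Definition kfair_dom (k : nat) (D : {set T}) : bool :=
  dominating D && [forall v, (v \notin D) ==> (#|nbhd v :&: D| == k)].

(* D is a fair dominating set: k-fair for some k >= 1.  Since
   #|N(v) :&: D| <= #|T|, restricting k to k <= #|T| loses nothing. *)
Definition fair_dom (D : {set T}) : bool :=
  [exists k : 'I_(#|T|.+1), (0 < k) && kfair_dom k D].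

Definition has_edge : bool := [exists u, exists v, e u v].

(* fair domination number; gamma_f of an edgeless graph is n by convention *)
Definition fair_dom_number : nat :=
  if has_edge then \big[minn/#|T|]_(D : {set T} | fair_dom D) #|D|
  else #|T|.

Definition fair_coalition (A1 A2 : {set T}) : bool :=
  [&& [disjoint A1 & A2], ~~ fair_dom A1, ~~ fair_dom A2
    & fair_dom (A1 :|: A2)].

Definition fc_partition (P : {set {set T}}) : bool :=
  partition P [set: T] &&
  [forall A in P,
     (fair_dom A && (#|A| == 1))
     || (~~ fair_dom A && [exists B in P, (B != A) && fair_coalition A B])].

Definition fair_coalition_number : nat :=
  \max_(P : {set {set T}} | fc_partition P) #|P|.

End FairCoalition.

(* Main.v *)
Require Import Defs.
From mathcomp Require Import all_boot.
From mathcomp Require Import zify.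

Lemma bigmin_le_seq (I : eqType) (s : seq I) (P : pred I) (F : I -> nat) x j :
  j \in s -> P j -> \big[minn/x]_(i <- s | P i) F i <= F j.
Proof.
elim: s => // a s IH; rewrite inE big_cons => /orP [/eqP <-|js] Pj.
  by rewrite Pj geq_minl.
case: (P a); last exact: IH.
by apply: leq_trans (geq_minr _ _) (IH js Pj).
Qed.

Lemma gamma_le (T : finType) (e : rel T) (D : {set T}) :
  fair_dom e D -> fair_dom_number e <= #|D|.
Proof.
move=> fD; rewrite /fair_dom_number.
case: ifP => he.
  by apply: (@bigmin_le_seq _ _ _ (fun X : {set T} => #|X|)) => //; rewrite mem_index_enum.
suff -> : D = setT by rewrite cardsT.
apply/setP => v; rewrite inE; apply/negPn/negP => vD.
move: fD => /existsP [k /andP [_ /andP [/forallP /(_ v) dom _]]].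
move: dom; rewrite vD /= => /existsP [u /andP [_ euv]].
suff : has_edge e by rewrite he.
by apply/existsP; exists v; apply/existsP; exists u.
Qed.

Arguments gamma_le {T e D}.

Lemma card_parts_le (T : finType) (P : {set {set T}}) :
  trivIset P -> set0 \notin P -> #|P| <= #|cover P|.
Proof.
move=> tP P0.
have pP : partition P (cover P) by rewrite /partition eqxx tP P0.
rewrite (card_partition pP) -sum1_card; apply: leq_sum => A AP.
by rewrite card_gt0; apply: contraNneq P0 => <-.
Qed.

Theorem theorem2p7 (T : finType) (e : rel T)
  (e_sym : symmetric e) (e_irr : irreflexive e) :
  fair_coalition_number e <= #|T| - fair_dom_number e + 2.
Proof.
apply/bigmax_leqP => P /andP [pP /forallP fcP].
have tP := partition_trivIset pP.
have P0 : set0 \notin P by case/and3P: pP.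
have cP : cover P = setT by case/and3P: pP => /eqP.
have leP : #|P| <= #|T| by rewrite -cardsT -cP card_parts_le.
case: (boolP [exists A in P, ~~ (fair_dom e A && (#|A| == 1))]) => [/existsP [A /andP [AP nA]] | /existsP nA].
  move: (fcP A); rewrite AP /= (negbTE nA) /= => /andP [_ /existsP [B /andP [BP /andP [BA fc]]]].
  case/and4P: fc => dAB _ _ fAB.
  have g := gamma_le fAB.
  set Q := P :\: [set A; B].
  have QP : Q \subset P by apply: subsetDl.
  have cardQ : #|P| = #|Q| + 2.
    have sAB : [set A; B] \subset P by apply/subsetP => X; rewrite !inE => /orP [] /eqP ->.
    rewrite -(cardsID [set A; B] P) (setIidPr sAB) cards2 eq_sym BA addnC.
    by [].
  have hQ : #|Q| <= #|cover Q|.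
    apply: card_parts_le; first exact: trivIsetS QP tP.
    by apply: contra P0; apply: (subsetP QP).
  have cQ : cover Q \subset ~: (A :|: B).
    apply/subsetP => x /bigcupP [C]; rewrite !inE negb_or => /andP [/andP [CA CB] CP] xC.
    apply/negP => /orP [] xX.
      have := trivIsetP tP C A CP AP CA; rewrite -setI_eq0 => /eqP/setP/(_ x).
      by rewrite !inE xC xX.
    have := trivIsetP tP C B CP BP CB; rewrite -setI_eq0 => /eqP/setP/(_ x).
    by rewrite !inE xC xX.
  have := subset_leq_card cQ; rewrite [#|~: _|]cardsCs setCK => h.
  have hAB : #|A :|: B| <= #|T| by apply: max_card.
  rewrite cardQ leq_add2r.
  apply: leq_trans hQ (leq_trans h _).
  by apply: leq_sub2l.
case: (set_0Vmem P) => [-> | [A AP]]; first by rewrite cards0.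
have := fcP A; rewrite AP /=.
have : ~~ ~~ (fair_dom e A && (#|A| == 1)).
  by apply/negP => h; apply: nA; exists A; rewrite AP h.
rewrite negbK => /andP [fA /eqP cA] _.
have := gamma_le fA; rewrite cA => g1.
move: g1 leP; move: (fair_dom_number e) (#|P|) => g p.

case: g => [|[|]] // _ h; rewrite ?subn0 ?subn1. by apply: leq_trans h (leq_addr _ _). by apply: leq_trans h _; case: #|T| => // m; rewrite /= addn2.
Qed.
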